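(* Consider the closed-loop system $\dot p_i=\mathrm{sat}(v_i^{\mathrm{ms}}(\mathbf p)+v_i^{\mathrm{cv}}(\mathbf p))$, $i=1,\dots,n$, defined in the context (with true masses $P_k(\mathbf p)$). Then for any initial state $\mathbf p(t_0)\in\mathbb{R}^{dn}$, the trajectory $\mathbf p(t)$ is bounded for all $t\ge t_0$.
   Context: Setting: $n\ge2$ robots in $\mathbb{R}^d$, positions $p_i\in\mathbb{R}^d$, configuration $\mathbf p=[p_1^\top,\dots,p_n^\top]^\top\in\mathbb{R}^{dn}$; fixed sample points $q_1,\dots,q_m\in\mathbb{R}^d$; constants $\beta>0$, $\sigma_1>0$, $\sigma_2>0$, $\varepsilon\in(0,1)$, $r_{\mathrm{avoid}}>0$, $v_{\max}>0$. Mass: $P_k(\mathbf p)=\frac1n\sum_{i=1}^n e^{-\beta\|q_k-p_i\|^2}$. Meanshift command: $v_i^{\mathrm{ms}}(\mathbf p)=\dfrac{\frac{\sigma_1}{m}\sum_{k=1}^m P_k(\mathbf p)^{-1}e^{-\beta\|q_k-p_i\|^2}(q_k-p_i)}{\sum_{k=1}^m P_k(\mathbf p)^{-1}e^{-\beta\|q_k-p_i\|^2}}$. Repulsive term: $\tilde v_i^{\mathrm{cv}}=\sigma_2\sum_{j\ne i,\ \|p_i-p_j\|\le r_{\mathrm{avoid}}}\frac{r_{\mathrm{avoid}}-\|p_i-p_j\|}{\|p_i-p_j\|+\varepsilon}(p_i-p_j)$. With $\varphi=\min\{\|v_i^{\mathrm{ms}}\|^2/\varepsilon,1\}$, the gain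 is $\kappa_2=\varphi$ if $(v_i^{\mathrm{ms}})^\top\tilde v_i^{\mathrm{cv}}\ge0$ and $\kappa_2=\varphi\min\{-(1-\varepsilon)\|v_i^{\mathrm{ms}}\|^2/((v_i^{\mathrm{ms}})^\top\tilde v_i^{\mathrm{cv}}),1\}$ if $(v_i^{\mathrm{ms}})^\top\tilde v_i^{\mathrm{cv}}<0$; collision-avoidance command $v_i^{\mathrm{cv}}=\kappa_2\tilde v_i^{\mathrm{cv}}$. Saturation: $\mathrm{sat}(z)=v_{\max}z/\|z\|$ if $\|z\|>v_{\max}$, and $\mathrm{sat}(z)=z$ otherwise. *)

(* Defs.v *)
From HB Require Import structures.
From mathcomp Require Import all_boot all_order all_algebra.
From mathcomp Require Import all_classical all_reals all_analysis.
Set Implicit Arguments. Unset Strict Implicit. Unset Printing Implicit Defensive.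
Import Order.TTheory GRing.Theory Num.Theory.
Import numFieldNormedType.Exports.
Local Open Scope ring_scope.

Section Coverage.
Variables (R : realType) (n d m : nat).

Definition dotv (u v : 'rV[R]_d) : R := \sum_(j < d) u 0 j * v 0 j.
Definition enorm (u : 'rV[R]_d) : R := Num.sqrt (dotv u u).

Variables (q : 'I_m -> 'rV[R]_d) (beta sigma1 sigma2 eps ravoid vmax : R).

Definition wgt (p : 'I_n -> 'rV[R]_d) (k : 'I_m) (i : 'I_n) : R :=
  expR (- beta * dotv (q k - p i) (q k - p i)).

Definition mass (p : 'I_n -> 'rV[R]_d) (k : 'I_m) : R :=
  n%:R^-1 * \sum_(i < n) wgt p k i.

Definition vms (p : 'I_n -> 'rV[R]_d) (i : 'I_n) : 'rV[R]_d :=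
  (\sum_(k < m) (mass p k)^-1 * wgt p k i)^-1 *:
  ((sigma1 / m%:R) *: \sum_(k < m) ((mass p k)^-1 * wgt p k i) *: (q k - p i)).

Definition vcv_tilde (p : 'I_n -> 'rV[R]_d) (i : 'I_n) : 'rV[R]_d :=
  sigma2 *: \sum_(j < n | (j != i) && (enorm (p i - p j) <= ravoid))
     ((ravoid - enorm (p i - p j)) / (enorm (p i - p j) + eps)) *: (p i - p j).

Definition kappa2 (p : 'I_n -> 'rV[R]_d) (i : 'I_n) : R :=
  let a := vms p i in
  let b := vcv_tilde p i in
  let phi := Num.min (dotv a a / eps) 1 in
  if 0 <= dotv a b then phi
  else phi * Num.min (- (1 - eps) * dotv a a / dotv a b) 1.

Definition vcv (p : 'I_n -> 'rV[R]_d) (i : 'I_n) : 'rV[R]_d :=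
  kappa2 p i *: vcv_tilde p i.

Definition sat (z : 'rV[R]_d) : 'rV[R]_d :=
  if vmax < enorm z then (vmax / enorm z) *: z else z.

Definition field (p : 'I_n -> 'rV[R]_d) (i : 'I_n) : 'rV[R]_d :=
  sat (vms p i + vcv p i).

End Coverage.

(* Main.v *)
Require Import Defs.
From HB Require Import structures.
From mathcomp Require Import all_boot all_order all_algebra.
From mathcomp Require Import all_classical all_reals all_analysis.
From mathcomp Require Import lra ring.
Import Order.TTheory GRing.Theory Num.Theory.
Import numFieldNormedType.Exports.
Local Open Scope classical_set_scope.
Local Open Scope ring_scope.

Set Implicit Arguments. Unset Strict Implicit.
Section Dot.
Variables (R : realType) (d : nat).
Implicit Types (u v w : 'rV[R]_d).

Lemma dotvC u v : dotv u v = dotv v u.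
Proof. by rewrite /dotv; apply: eq_bigr => j _; rewrite mulrC. Qed.

Lemma dotvDr u v w : dotv u (v + w) = dotv u v + dotv u w.
Proof. by rewrite /dotv -big_split; apply: eq_bigr => j _; rewrite !mxE mulrDr. Qed.

Lemma dotvZr a u v : dotv u (a *: v) = a * dotv u v.
Proof. by rewrite /dotv mulr_sumr; apply: eq_bigr => j _; rewrite !mxE mulrCA. Qed.

Lemma dotvNr u v : dotv u (- v) = - dotv u v.
Proof. by rewrite /dotv -sumrN; apply: eq_bigr => j _; rewrite !mxE mulrN. Qed.

Lemma dotvBr u v w : dotv u (v - w) = dotv u v - dotv u w.
Proof. by rewrite dotvDr dotvNr. Qed.

Lemma dotvDl u v w : dotv (v + w) u = dotv v u + dotv w u.
Proof. by rewrite dotvC dotvDr !(dotvC u). Qed.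
Lemma dotvZl a u v : dotv (a *: v) u = a * dotv v u.
Proof. by rewrite dotvC dotvZr dotvC. Qed.
Lemma dotvBl u v w : dotv (v - w) u = dotv v u - dotv w u.
Proof. by rewrite dotvC dotvBr !(dotvC u). Qed.

Lemma dotv_ge0 u : 0 <= dotv u u.
Proof. by apply: sumr_ge0 => j _; rewrite -expr2 sqr_ge0. Qed.

Lemma dotv_young a u v : 0 < a -> 2 * dotv u v <= a * dotv u u + a^-1 * dotv v v.
Proof.
move=> a0; have := dotv_ge0 (a *: u - v).
rewrite !dotvBl !dotvBr !dotvZl !dotvZr (dotvC v u) => H.
have : 0 <= a^-1 * (a * (a * dotv u u) - a * dotv u v - (a * dotv u v - dotv v v)).
  by rewrite mulr_ge0 // invr_ge0 ltW.
rewrite !mulrDr !mulrN !mulrA mulVf ?gt_eqF // !mul1r mulrBr mulrA mulVf ?gt_eqF // mul1r; lra.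
Qed.

Lemma dotv_par u v : dotv (u + v) (u + v) <= 2 * dotv u u + 2 * dotv v v.
Proof.
have := @dotv_young 1 u v ltr01; rewrite invr1 !mul1r.
rewrite !dotvDl !dotvDr (dotvC v u); lra.
Qed.

Lemma coord_le u (j : 'I_d) : (u 0 j) ^+ 2 <= dotv u u.
Proof.
rewrite /dotv (bigD1 j) //= -expr2 lerDl.
by apply: sumr_ge0 => k _; rewrite -expr2 sqr_ge0.
Qed.

Lemma coord_norm u (j : 'I_d) : `|u 0 j| <= enorm u.
Proof.
by rewrite /enorm -sqrtr_sqr ler_sqrt ?dotv_ge0 // coord_le.
Qed.

Lemma dotv_bound u (D : 'I_d -> R) : (forall j, `|u 0 j| <= D j) ->
  dotv u u <= \sum_j D j ^+ 2.
Proof.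
move=> H; apply: ler_sum => j _; rewrite -expr2 -real_normK ?num_real //.
by rewrite lerXn2r ?nnegrE ?(le_trans _ (H j)) //.
Qed.

End Dot.
Unset Implicit Arguments. Set Strict Implicit.
Lemma key_ineq (R : realType) (d : nat) (v b c p : 'rV[R]_d) (s e k Q B : R) :
 0 < s -> 0 < e -> 0 <= k <= 1 -> v = s *: (c - p) ->
 e * dotv v v <= dotv v (v + k *: b) -> dotv c c <= Q -> dotv b b <= B ->
 4 / (e * s) * (e * s * Q / 2 + s / e * Q / 2 + (Q + B) / 2) <= dotv p p ->
 dotv p (v + k *: b) <= 0.
Proof.
move=> s0 e0 /andP[k0 k1] hv hvz hc hb hp.
set z := v + k *: b.
have hp' : p = c - s^-1 *: v.
  by rewrite hv scalerA mulVf ?gt_eqF // scale1r opprB addrC subrK.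
have pz : dotv p z = dotv c z - s^-1 * dotv v z by rewrite {1}hp' dotvBl dotvZl.
have cz : dotv c z = dotv c v + k * dotv c b by rewrite /z dotvDr dotvZr.
set W := dotv (c - p) (c - p).
have vv : dotv v v = s * s * W by rewrite hv dotvZl dotvZr mulrA.
have es0 : 0 < e * s by rewrite mulr_gt0.
have y1 := @dotv_young R d (e / s) v c (divr_gt0 e0 s0).
rewrite vv invf_div (dotvC v c) in y1.
have y1' : (e / s) * (s * s * W) = e * s * W.
  by field; rewrite gt_eqF.
have y2 := @dotv_young R d 1 c (k *: b) ltr01.
rewrite invr1 !mul1r dotvZr dotvZl dotvZr in y2.
have kbb : k * (k * dotv b b) <= dotv b b.
  rewrite mulrA -[X in _ <= X]mul1r ler_wpM2r ?dotv_ge0 //.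
  by rewrite -[1]mulr1 ler_pM.
have par := @dotv_par R d (p - c) c.
rewrite subrK in par.
have Wpc : dotv (p - c) (p - c) = W.
  by rewrite /W -(opprB c p) dotvNr dotvC dotvNr opprK.
rewrite Wpc in par.
have vzs : e * s * W <= s^-1 * dotv v z.
  have : s^-1 * (e * dotv v v) <= s^-1 * dotv v z.
    by rewrite ler_wpM2l // invr_ge0 ltW.
  suff -> : s^-1 * (e * dotv v v) = e * s * W by []. by rewrite vv; field; rewrite gt_eqF.
have cc0 := dotv_ge0 c.
have W0 : e * s * (dotv p p / 2 - dotv c c) <= e * s * W.
  apply: ler_wpM2l; [exact: ltW | lra].
have hp2 : e * s * Q / 2 + s / e * Q / 2 + (Q + B) / 2 <= e * s * dotv p p / 4.
  have h := ler_wpM2l (ltW es0) hp.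
  have E : e * s * (4 / (e * s) * (e * s * Q / 2 + s / e * Q / 2 + (Q + B) / 2))
    = 4 * (e * s * Q / 2 + s / e * Q / 2 + (Q + B) / 2).
    by field; rewrite ?gt_eqF //.
  rewrite E in h; lra.
have hsQ : s / e * dotv c c <= s / e * Q by rewrite ler_wpM2l // ltW // divr_gt0.
have heQ : e * s * dotv c c <= e * s * Q by rewrite ler_wpM2l // ltW.
rewrite -/z pz cz; rewrite y1' in y1; lra.
Qed.
Lemma sum_pos_one (R : realType) (I : finType) (i : I) (F : I -> R) :
  (forall j, 0 < F j) -> 0 < \sum_j F j.
Proof.
move=> H; rewrite (bigD1 i) //=; apply: ltr_pwDl => //.
by apply: sumr_ge0 => j _; exact: ltW.
Qed.

Lemma term_le_sum (R : realType) (I : finType) (i : I) (F : I -> R) :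
  (forall j, 0 <= F j) -> F i <= \sum_j F j.
Proof.
move=> H; rewrite (bigD1 i) //= lerDl; by apply: sumr_ge0.
Qed.

Section M.
Variables (R : realType) (n d m : nat) (q : 'I_m -> 'rV[R]_d)
  (beta sigma1 sigma2 eps ravoid vmax : R).

Lemma wgt_gt0 (p : 'I_n -> 'rV[R]_d) k i : 0 < wgt q beta p k i.
Proof. exact: expR_gt0. Qed.

Lemma mass_gt0 (p : 'I_n -> 'rV[R]_d) k (i : 'I_n) : 0 < mass q beta p k.
Proof.
apply: mulr_gt0.
  by rewrite invr_gt0 ltr0n; case: (n) i => // -[].
by apply: (@sum_pos_one R _ i (fun j => wgt q beta p k j)) => j; exact: wgt_gt0.
Qed.

Definition aw (p : 'I_n -> 'rV[R]_d) i k := (mass q beta p k)^-1 * wgt q beta p k i.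
Definition Aw p i := \sum_k aw p i k.
Definition cw p i := (Aw p i)^-1 *: \sum_k aw p i k *: q k.

Lemma aw_gt0 p i k : 0 < aw p i k.
Proof. by rewrite mulr_gt0 ?wgt_gt0 // invr_gt0 (mass_gt0 _ _ i). Qed.

Lemma Aw_gt0 p i (k : 'I_m) : 0 < Aw p i.
Proof. by apply: (@sum_pos_one R _ k (aw p i)) => j; exact: aw_gt0. Qed.

Lemma vms_form p i (k : 'I_m) :
  vms q beta sigma1 p i = (sigma1 / m%:R) *: (cw p i - p i).
Proof.
have A0 : Aw p i != 0 by rewrite gt_eqF // (Aw_gt0 _ _ k).
rewrite /vms /cw -/(aw p i _) -/(Aw p i).
have -> : \sum_k aw p i k *: (q k - p i) = \sum_k aw p i k *: q k - Aw p i *: p i.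
  rewrite /Aw scaler_suml -sumrB; apply: eq_bigr => j _; exact: scalerBr.
rewrite scalerA [in RHS]scalerBr scalerBr !scalerA.
congr (_ - _); congr (_ *: _); [by rewrite mulrC | by rewrite mulrC mulrA mulfV // mul1r].
Qed.

Definition Dq (j : 'I_d) := \sum_k `|q k 0 j|.

Lemma cw_bound p i (k : 'I_m) j : `|cw p i 0 j| <= Dq j.
Proof.
have A0 := Aw_gt0 p i k.
have Ai : 0 <= (Aw p i)^-1 by rewrite invr_ge0 ltW.
rewrite /cw mxE summxE normrM (ger0_norm Ai).
rewrite ler_pdivrMl //.
apply: le_trans (ler_norm_sum _ _ _) _.
rewrite /Aw mulr_suml; apply: ler_sum => l _.
have al := aw_gt0 p i l.
rewrite mxE normrM (ger0_norm (ltW al)) ler_wpM2l ?(ltW al) //.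
by rewrite /Dq; apply: (@term_le_sum R _ l (fun l => `|q l 0 j|)) => ?.
Qed.

Lemma cw_dot p i (k : 'I_m) : dotv (cw p i) (cw p i) <= \sum_j Dq j ^+ 2.
Proof. apply: dotv_bound => j; exact: cw_bound. Qed.


Lemma vcvt_bound (p : 'I_n -> 'rV[R]_d) i l :
  0 < sigma2 -> 0 < eps -> 0 < ravoid ->
  `|vcv_tilde sigma2 eps ravoid p i 0 l| <= sigma2 * (n%:R * ravoid).
Proof.
move=> s20 e0 r0.
rewrite /vcv_tilde mxE summxE normrM (ger0_norm (ltW s20)) ler_wpM2l ?(ltW s20) //.
apply: le_trans (ler_norm_sum _ _ _) _.
rewrite big_mkcond /=.
have -> : n%:R * ravoid = \sum_(j < n) ravoid by rewrite sumr_const card_ord mulr_natl.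
apply: ler_sum => j _; case: ifP => [/andP[_ hj] | _]; last by rewrite ltW.
set e := enorm (p i - p j).
have e0' : 0 <= e by rewrite /e /enorm sqrtr_ge0.
have hx : `|(p i - p j) 0 l| <= e by apply: coord_norm.
have g0 : 0 <= (ravoid - e) / (e + eps) by rewrite divr_ge0 // ?subr_ge0 // addr_ge0 // ltW.
rewrite [X in `|X|]mxE normrM (ger0_norm g0).
apply: le_trans (ler_wpM2l g0 hx) _.
rewrite mulrAC ler_pdivrMr; last lra.
nra.
Qed.

Lemma kappa_prop (p : 'I_n -> 'rV[R]_d) i :
  0 < eps -> eps < 1 ->
  let v := vms q beta sigma1 p i in
  let b := vcv_tilde sigma2 eps ravoid p i in
  let k := kappa2 q beta sigma1 sigma2 eps ravoid p i in
  [/\ 0 <= k, k <= 1 & eps * dotv v v <= dotv v (v + k *: b)].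
Proof.
move=> e0 e1 v b k.
have vv0 : 0 <= dotv v v by apply: dotv_ge0.
rewrite dotvDr dotvZr.
have kdef : k = let phi := Num.min (dotv v v / eps) 1 in
  if 0 <= dotv v b then phi
  else phi * Num.min (- (1 - eps) * dotv v v / dotv v b) 1 by [].
rewrite kdef /=.
set phi := Num.min (dotv v v / eps) 1.
have ph0 : 0 <= phi by rewrite le_min ler01 andbT divr_ge0 // ltW.
have ph1 : phi <= 1 by rewrite ge_min lexx orbT.
case: ifP => hab.
  split => //; nra.
have ab : dotv v b < 0 by rewrite ltNge hab.
set X := - (1 - eps) * dotv v v / dotv v b.
have X0 : 0 <= X.
  rewrite /X mulr_le0 //; last by rewrite invr_le0 ltW.
  rewrite mulNr oppr_le0 mulr_ge0 //; lra.
have Xab : X * dotv v b = - (1 - eps) * dotv v v by rewrite /X divfK // lt_eqF.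
set mu := Num.min X 1.
have mu0 : 0 <= mu by rewrite le_min X0 ler01.
have mu1 : mu <= 1 by rewrite ge_min lexx orbT.
have muX : mu <= X by rewrite ge_min lexx.
have mab : X * dotv v b <= mu * dotv v b.
  by rewrite -subr_ge0 -mulrBl mulr_le0 // ?subr_le0 // ltW.
have t0 : mu * dotv v b <= 0 by rewrite mulr_ge0_le0 // ltW.
split; first exact: mulr_ge0.
  by rewrite -[1]mulr1 ler_pM.
rewrite -mulrA.
have : phi * (mu * dotv v b) >= mu * dotv v b.
  rewrite -subr_ge0 -{2}[mu * dotv v b]mul1r -mulrBl mulr_le0 //; lra.
lra.
Qed.

Lemma sat_dot (u z : 'rV[R]_d) : 0 < vmax -> dotv u z <= 0 -> dotv u (sat vmax z) <= 0.
Proof.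
move=> v0 h; rewrite /sat; case: ifP => _ //.
rewrite dotvZr; apply: mulr_ge0_le0 => //; apply: divr_ge0; [exact: ltW | exact: sqrtr_ge0].
Qed.


Lemma field_inward (m0 : (0 < m)%N) :
  0 < sigma1 -> 0 < sigma2 -> 0 < eps -> eps < 1 -> 0 < ravoid -> 0 < vmax ->
  exists R0, forall (p : 'I_n -> 'rV[R]_d) i, R0 <= dotv (p i) (p i) ->
    dotv (p i) (field q beta sigma1 sigma2 eps ravoid vmax p i) <= 0.
Proof.
move=> s10 s20 e0 e1 r0 v0.
pose s := sigma1 / m%:R.
pose Q := \sum_j Dq j ^+ 2.
pose B := \sum_(l < d) (sigma2 * (n%:R * ravoid)) ^+ 2.
exists (4 / (eps * s) * (eps * s * Q / 2 + s / eps * Q / 2 + (Q + B) / 2)).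
move=> p i hp; pose k0 := Ordinal m0.
rewrite /field /vcv; apply: sat_dot => //.
have [kk0 kk1 hvz] := kappa_prop p i e0 e1.
apply: (@key_ineq R d _ _ (cw p i) _ s eps _ Q B) => //.
- by rewrite divr_gt0 // ltr0n.
- by rewrite kk0 kk1.
- exact: vms_form k0.
- exact: cw_dot k0.
- by apply: dotv_bound => l; apply: vcvt_bound.
Qed.

End M.
Lemma cont_of_derive (R : realType) (f : R -> R) (x d : R) :
  is_derive x 1 f d -> {for x, continuous f}.
Proof.
move=> H; apply/differentiable_continuous; rewrite -derivable1_diffP.
by case: H.
Qed.

Lemma ode_bound (R : realType) (f df : R -> R) (t0 C : R) :
  f x @[x --> t0^'+] --> f t0 ->
  (forall t, t0 < t -> is_derive t 1 f (df t)) ->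
  (forall t, t0 < t -> C <= f t -> df t <= 0) ->
  f t0 <= C -> forall t, t0 <= t -> f t <= C.
Proof.
move=> fr fd dn f0 t1 t01.
rewrite leNgt; apply/negP => Ht1.
have t01' : t0 < t1.
  by rewrite lt_neqAle t01 andbT; apply/eqP => E; move: Ht1; rewrite -E ltNge f0.
pose e := (f t1 - C) / 3.
have e0 : 0 < e by rewrite divr_gt0 // subr_gt0.
have ft1 : f t1 = C + 3 * e by rewrite /e mulrC divfK // addrC subrK.
pose S := [set t | t0 <= t <= t1 /\ f t <= C + e].
have S0 : S t0 by split; rewrite ?lexx ?t01 //; rewrite -[f t0]addr0 lerD // ltW.
have hS : has_sup S.
  split; first by exists t0.
  by exists t1 => t [/andP[_ ?] _].
pose s := sup S.
have ss : forall x, S x -> x <= s by move=> x Sx; exact: sup_upper_bound.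
have st0 : t0 <= s by exact: ss.
have st1 : s <= t1 by apply: ge_sup; [exists t0| move=> t [/andP[_ ?] _]].
have [s' [s's s't1 t0s' fs']] : exists s', [/\ s < s', s' < t1, t0 < s' & f s' < f t1].
  case: (ltgtP t0 s) st0 => // [t0s|t0s] _.
  - have /cvgrPdist_lt /(_ e e0) := @cont_of_derive _ _ _ _ (fd s t0s).
    case/nbhs_ballP => /= del del0 Hb.
    have [x Sx xs] := sup_adherent del0 hS.
    have fxs : f s < C + 2 * e.
      have := Hb x; rewrite /ball /= => /(_ _).
      have H1 : `|s - x| < del.
        rewrite ger0_norm ?subr_ge0 ?ss //; rewrite ltrBlDr addrC -ltrBlDr //.
      move=> /(_ H1); case: Sx => _ fx.
      rewrite ltr_distlC => /andP[+ _]; lra.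
    have st : s < t1.
      rewrite lt_neqAle st1 andbT; apply/eqP => E; move: fxs; rewrite E ft1; lra.
    exists (Num.min (s + del / 2) ((s + t1) / 2)).
    have hd : 0 < del / 2 by rewrite divr_gt0.
    split.
    + rewrite lt_min; apply/andP; split; lra.
    + rewrite gt_min; apply/orP; right; lra.
    + rewrite lt_min; apply/andP; split; lra.
    + have := Hb (Num.min (s + del / 2) ((s + t1) / 2)).
      have H1 : `|s - Num.min (s + del / 2) ((s + t1) / 2)| < del.
        rewrite distrC ger0_norm; last by rewrite subr_ge0 le_min; apply/andP; split; lra.
        rewrite ltrBlDr; rewrite gt_min; apply/orP; left; lra.
      move=> /(_ H1); rewrite ft1 ltr_distlC => /andP[_]; lra.
  - move/cvgrPdist_lt: fr => /(_ e e0).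
    rewrite near_withinE => /nbhs_ballP [/= del del0 Hb].
    exists (Num.min (t0 + del / 2) ((t0 + t1) / 2)).
    have hd : 0 < del / 2 by rewrite divr_gt0.
    have m1 : t0 < Num.min (t0 + del / 2) ((t0 + t1) / 2).
      rewrite lt_min; apply/andP; split; lra.
    split; rewrite -?t0s //.
    + rewrite gt_min; apply/orP; right; lra.
    + have := Hb (Num.min (t0 + del / 2) ((t0 + t1) / 2)).
      have H1 : ball t0 del (Num.min (t0 + del / 2) ((t0 + t1) / 2)).
        rewrite /ball /= distrC ger0_norm; last by rewrite subr_ge0 ltW.
        rewrite ltrBlDr; rewrite gt_min; apply/orP; left; lra.
      move=> /(_ H1 m1); rewrite ft1 ltr_distlC => /andP[_]; lra.
have [c cin Hc] : exists2 c, c \in `]s', t1[ & f t1 - f s' = df c * (t1 - s').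
  apply: MVT => //.
  - move=> x; rewrite in_itv /= => /andP[x1 _]; apply: fd; lra.
  - apply: derivable_within_continuous => x; rewrite in_itv /= => /andP[x1 _].
    have /fd [] // : t0 < x by lra.
move: cin; rewrite in_itv /= => /andP[c1 c2].
have fc : C < f c.
  have : ~ S c.
    move=> Sc; have := ss c Sc; lra.
  rewrite /S => H; rewrite ltNge; apply/negP => fcC.
  apply: H; split; first (apply/andP; split; lra).
  lra.
have := dn c (ltac:(lra)) (ltW fc).
have : 0 < t1 - s' by lra.
move=> h1 h2; have : df c * (t1 - s') <= 0 by rewrite mulr_le0_ge0 // ltW.
lra.
Qed.
Theorem lemma4 (R : realType) (n d m : nat) (q : 'I_m -> 'rV[R]_d)
  (beta sigma1 sigma2 eps ravoid vmax : R) :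
  (2 <= n)%N -> (0 < m)%N ->
  0 < beta -> 0 < sigma1 -> 0 < sigma2 -> 0 < eps -> eps < 1 ->
  0 < ravoid -> 0 < vmax ->
  forall (t0 : R) (p : R -> 'I_n -> 'rV[R]_d),
  (forall (i : 'I_n) (j : 'I_d),
     {within `[t0, +oo[, continuous (fun t => p t i 0 j)}) ->
  (forall t : R, t0 < t -> forall (i : 'I_n) (j : 'I_d),
     is_derive t 1 (fun s => p s i 0 j)
       (field q beta sigma1 sigma2 eps ravoid vmax (p t) i 0 j)) ->
  exists M : R, forall t : R, t0 <= t -> forall i : 'I_n, enorm (p t i) <= M.
Proof.
move=> n2 m0 b0 s10 s20 e0 e1 r0 v0 t0 p hc hd.
have [R0 HR0] := @field_inward R n d m q beta sigma1 sigma2 eps ravoid vmax m0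
  s10 s20 e0 e1 r0 v0.
pose S0 := \sum_i dotv (p t0 i) (p t0 i).
exists (Num.sqrt (`|R0| + S0)) => t tt i.
pose F := @field R n d m q beta sigma1 sigma2 eps ravoid vmax.
pose f := fun s => dotv (p s i) (p s i).
pose df := fun s => 2 * dotv (p s i) (F (p s) i).
have fE : f = \sum_(j < d) ((fun s => p s i 0 j) * (fun s => p s i 0 j)).
  apply/funext => s; rewrite /f /dotv fct_sumE; apply: eq_bigr => j _ //.
have fr : f x @[x --> t0^'+] --> f t0.
  rewrite /f /dotv.
  apply: (@cvg_big R _ +%R 0 xpredT add_continuous R _ _
    (fun j s => p s i 0 j * p s i 0 j)) => j _.
  apply: cvgM.
  - by have /continuous_within_itvcyP[] := hc i j.
  - by have /continuous_within_itvcyP[] := hc i j.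
have fd : forall s, t0 < s -> is_derive s 1 f (df s).
  move=> s ts; rewrite fE; apply: is_derive_eq.
    apply: is_derive_sum => j; apply: is_deriveM; exact: hd.
  rewrite /df /dotv mulr_sumr; apply: eq_bigr => j _ /=.
  rewrite /F -!/(_ * _) mulr2n mulrDl mul1r; reflexivity.
pose C := Num.max R0 (f t0).
have := @ode_bound R f df t0 C fr fd.
have dn : forall s, t0 < s -> C <= f s -> df s <= 0.
  move=> s _ hs; rewrite /df pmulr_rle0 //; apply: HR0.
  by apply: le_trans hs; rewrite le_max lexx.
move=> /(_ dn); rewrite le_max lexx orbT => /(_ erefl t tt) ft.
rewrite /enorm ler_sqrt; last first.
  by rewrite addr_ge0 // /S0 sumr_ge0 // => k _; apply: dotv_ge0.
apply: le_trans ft _; rewrite ge_max; apply/andP; split.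
  have : 0 <= S0 by rewrite /S0 sumr_ge0 // => k _; apply: dotv_ge0.
  have := ler_norm R0; lra.
have : f t0 <= S0 by apply: (@term_le_sum R _ i (fun k => dotv (p t0 k) (p t0 k))) => k; apply: dotv_ge0.
have := normr_ge0 R0; lra.
Qed.
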